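(* Let $V$ be a proper $K$-poset with a single maximal node $m$ (and $\dim V\ge1$). If $d_V(m)>1$, then there exists a proper $K$-poset $U$ which is a splitting of $V$ at $m$, with associated set $\mathcal M\subseteq\max U$, such that $d_{L_U(m_i)}(m_i)=1$ for all $m_i\in\mathcal M$.
   Context: For a poset $U$: $L(u)=L_U(u)=\{v\le u\}$, $G(u)=\{v\ge u\}$, $L(u)^*$, $G(u)^*$ the same sets with $u$ removed; height of $u$ is $\dim L(u)$ (dimension = supremum of chain lengths); $H_i$ = set of height-$i$ nodes; $\operatorname{mub}A$ = minimal common upper bounds of $A$; $[b/c]$ = set of $u$ with $G(u)^*=\{b\}$, $L(u)^*=\{c\}$. A poset with $\dim\le2$ is a $K$-poset if $\min U$, $H_2$ are finite, $\operatorname{mub}\{u,v\}$ is finite for distinct minimal $u,v$, and $[u/w]$ is infinite whenever $u>v>w$ for some $v$; proper if $|[u/w]|\in\{0,|U|\}$ for all maximal $u$, minimal $w$. $\mathcal H_U$ = minimal nodes together with height-one nodes dominating at least two minimal nodes. For a poset $W$ with a single maximal node $n$ and $\dim W\ge1$: $\mathcal H_W^*=\mathcal H_W\setminus\{n\}$; $\Lambda_W\subseteq\mathcal H_W^*$ consists of the nodes of $H_1\cap\mathcal H_W^*$ together with all nodes $v\in\mathcal H_W^*$ with $G(v)\cap H_1\cap\mathcal H_W^*=\emptyset$; and $d_W(n)=|\Lambda_W|$. Splitting: for a poset $V$ with a maximal node $m$ of positive height, $U$ is a splitting of $V$ at $m$ if there are a finite nonempty $\mathcal M\subseteq\max U$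 of positive-height nodes and a surjective order-preserving $\varphi:U\to V$ with $\varphi^{-1}(m)=\mathcal M$, $|\varphi^{-1}(v)|=1$ for $v\ne m$, and such that whenever $\varphi(x')=x\le y$ there is $y'\ge x'$ with $\varphi(y')=y$. *)

(* Defs.v *)
From Stdlib Require Import List Arith ProofIrrelevance.
Import ListNotations.


Record Poset := {
  car :> Type;
  le : car -> car -> Prop;
  le_refl : forall x, le x x;
  le_antisym : forall x y, le x y -> le y x -> x = y;
  le_trans : forall x y z, le x y -> le y z -> le x z
}.

Section Notions.
Variable U : Poset.

Definition lt (x y : U) : Prop := le U x y /\ x <> y.

Definition Lset (u : U) : U -> Prop := fun v => le U v u.
Definition Gset (u : U) : U -> Prop := fun v => le U u v.

Definition finite_set (P : U -> Prop) : Prop :=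
  exists l : list U, forall x, P x -> In x l.

Definition equipotent_to_U (P : U -> Prop) : Prop :=
  exists f : {x : U | P x} -> U,
    (forall a b, f a = f b -> a = b) /\ (forall y, exists a, f a = y).

(** Chains, as strictly increasing finite lists;
    the length of a chain with k+1 elements is k. *)
Fixpoint incr (s : list U) : Prop :=
  match s with
  | x :: ((y :: _) as t) => lt x y /\ incr t
  | _ => True
  end.

Definition chain_in (P : U -> Prop) (s : list U) : Prop :=
  incr s /\ (forall x, In x s -> P x).

Definition dim_le (P : U -> Prop) (n : nat) : Prop :=
  forall s, chain_in P s -> length s <= S n.

Definition has_chain (P : U -> Prop) (n : nat) : Prop :=
  exists s, chain_in P s /\ length s = S n.

Definition dim_eq (P : U -> Prop) (n : nat) : Prop :=
  has_chain P n /\ dim_le P n.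

Definition setT : U -> Prop := fun _ => True.

Definition height (u : U) (i : nat) : Prop := dim_eq (Lset u) i.

Definition pos_height (u : U) : Prop := exists i, height u i /\ 0 < i.

Definition minimal (u : U) : Prop := forall v, le U v u -> v = u.
Definition maximal (u : U) : Prop := forall v, le U u v -> v = u.

Definition mub (A : U -> Prop) (x : U) : Prop :=
  (forall a, A a -> le U a x) /\
  (forall y, (forall a, A a -> le U a y) -> le U y x -> y = x).

Definition between (b c : U) (u : U) : Prop :=
  (forall v, (le U u v /\ v <> u) <-> v = b) /\
  (forall v, (le U v u /\ v <> u) <-> v = c).

Definition is_K : Prop :=
  dim_le setT 2 /\
  finite_set minimal /\
  finite_set (fun u => height u 2) /\
  (forall u v, minimal u -> minimal v -> u <> v ->
     finite_set (mub (fun z => z = u \/ z = v))) /\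
  (forall u v w, lt v u -> lt w v -> ~ finite_set (between u w)).

Definition proper : Prop :=
  forall u w, maximal u -> minimal w ->
    (forall x, ~ between u w x) \/ equipotent_to_U (between u w).

Definition in_H (u : U) : Prop :=
  minimal u \/
  (height u 1 /\ exists a b, a <> b /\ minimal a /\ minimal b /\
                             le U a u /\ le U b u).

(** For W (= U here) with single maximal node n:  H_W^*, Lambda_W. *)
Definition in_Hstar (n : U) (u : U) : Prop := in_H u /\ u <> n.

Definition Lambda (n : U) (v : U) : Prop :=
  (height v 1 /\ in_Hstar n v) \/
  (in_Hstar n v /\ ~ (exists w, Gset v w /\ height w 1 /\ in_Hstar n w)).

(** d_W(n) = |Lambda_W| ; we only need the cardinal comparisons
    |Lambda_W| = 1 and |Lambda_W| > 1. *)
Definition d_eq1 (n : U) : Prop :=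
  exists x, forall y, Lambda n y <-> y = x.

Definition d_gt1 (n : U) : Prop :=
  exists x y, x <> y /\ Lambda n x /\ Lambda n y.

End Notions.

Arguments lt {U} x y.
Arguments Lset {U} u v.
Arguments Gset {U} u v.
Arguments finite_set {U} P.
Arguments equipotent_to_U {U} P.
Arguments incr {U} s.
Arguments chain_in {U} P s.
Arguments dim_le {U} P n.
Arguments has_chain {U} P n.
Arguments dim_eq {U} P n.
Arguments height {U} u i.
Arguments pos_height {U} u.
Arguments minimal {U} u.
Arguments maximal {U} u.
Arguments mub {U} A x.
Arguments between {U} b c u.
Arguments in_H {U} u.
Arguments in_Hstar {U} n u.
Arguments Lambda {U} n v.
Arguments d_eq1 {U} n.
Arguments d_gt1 {U} n.

Section Sub.
Variable U : Poset.
Variable P : U -> Prop.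

Definition sub_le (a b : {x : U | P x}) : Prop := le U (proj1_sig a) (proj1_sig b).

Lemma sub_refl : forall a, sub_le a a.
Proof. intros [x Hx]; apply le_refl. Qed.

Lemma sub_antisym : forall a b, sub_le a b -> sub_le b a -> a = b.
Proof.
  intros [x Hx] [y Hy]; unfold sub_le; simpl; intros H1 H2.
  assert (E := le_antisym U x y H1 H2); subst y.
  f_equal; apply proof_irrelevance.
Qed.

Lemma sub_trans : forall a b c, sub_le a b -> sub_le b c -> sub_le a c.
Proof. intros [x Hx] [y Hy] [z Hz]; unfold sub_le; simpl; apply le_trans. Qed.

Definition subposet : Poset :=
  {| car := {x : U | P x}; le := sub_le;
     le_refl := sub_refl; le_antisym := sub_antisym; le_trans := sub_trans |}.
End Sub.

Definition Lposet (U : Poset) (u : U) : Poset := subposet U (Lset u).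
Definition Ltop (U : Poset) (u : U) : Lposet U u := exist (Lset u) u (le_refl U u).

Definition is_splitting (V : Poset) (m : V) (U : Poset)
  (M : U -> Prop) (phi : U -> V) : Prop :=
  maximal m /\ pos_height m /\
  finite_set M /\ (exists x, M x) /\
  (forall x, M x -> maximal x /\ pos_height x) /\
  (forall x y, le U x y -> le V (phi x) (phi y)) /\
  (forall y, exists x, phi x = y) /\
  (forall x, phi x = m <-> M x) /\
  (forall v, v <> m -> exists x, forall y, phi y = v <-> y = x) /\
  (forall x' y, le V (phi x') y -> exists y', le U x' y' /\ phi y' = y).
Arguments Lposet {U} u.
Arguments Ltop {U} u.
Arguments is_K U : clear implicits.

(* Main.v *)
From Stdlib Require Import List Arith Lia Classical ClassicalEpsilon ProofIrrelevance.
Require Import Defs.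
Import ListNotations.

Section Gen.
Variable P : Poset.

Lemma lt_le_trans (a b c : P) : lt a b -> le P b c -> lt a c.
Proof.
  intros [H1 H2] H3; split. eapply le_trans; eauto.
  intro E; subst c. apply H2. apply le_antisym; auto.
Qed.

Lemma le_lt_trans (a b c : P) : le P a b -> lt b c -> lt a c.
Proof.
  intros H1 [H2 H3]; split. eapply le_trans; eauto.
  intro E; subst c. apply H3. apply le_antisym; auto.
Qed.

Lemma lt_trans' (a b c : P) : lt a b -> lt b c -> lt a c.
Proof. intros H1 [H2 _]. eapply lt_le_trans; eauto. Qed.

Lemma not_minimal_ex (u : P) : ~ minimal u -> exists v, lt v u.
Proof.
  intro H. apply NNPP; intro H'. apply H. intros v Hv.
  apply NNPP; intro E. apply H'. exists v. split; auto.
Qed.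

Lemma minimal_no_lt (u v : P) : minimal u -> ~ lt v u.
Proof. intros H [H1 H2]. apply H2. apply H; auto. Qed.

Lemma not_maximal_ex (u : P) : ~ maximal u -> exists v, lt u v.
Proof.
  intro H. apply NNPP; intro H'. apply H. intros v Hv.
  apply NNPP; intro E. apply H'. exists v. split; auto.
Qed.

Definition h1 (u : P) : Prop := ~ minimal u /\ forall v, lt v u -> minimal v.

Lemma height1_iff (u : P) : height u 1 <-> h1 u.
Proof.
  split.
  - intros [[s [[Hi Hin] Hl]] Hd].
    destruct s as [|a [|b [|c t]]]; simpl in Hl; try discriminate.
    simpl in Hi. destruct Hi as [Hab _].
    assert (Hb : le P b u) by (apply Hin; simpl; auto).
    assert (Hau : lt a u) by (eapply lt_le_trans; eauto).
    split.
    + intro Hm. eapply minimal_no_lt; eauto.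
    + intros v Hv. apply NNPP; intro Hnm. apply not_minimal_ex in Hnm.
      destruct Hnm as [t Ht].
      assert (L := Hd [t; v; u]).
      simpl in L.
      assert (3 <= 2); [|lia]. apply L. split.
      * simpl. repeat split; try apply Ht; try apply Hv.
      * intros x Hx. simpl in Hx. unfold Lset.
        destruct Hx as [<-|[<-|[<-|[]]]].
        -- eapply le_trans; [apply Ht|apply Hv].
        -- apply Hv.
        -- apply le_refl.
  - intros [Hnm Hall]. split.
    + apply not_minimal_ex in Hnm. destruct Hnm as [v Hv].
      exists [v; u]. split; [split|].
      * simpl. split; auto.
      * intros x Hx. simpl in Hx. unfold Lset.
        destruct Hx as [<-|[<-|[]]]. apply Hv. apply le_refl.
      * reflexivity.
    + intros s [Hi Hin].
      destruct s as [|a [|b [|c t]]]; simpl; try lia.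
      exfalso. simpl in Hi. destruct Hi as [Hab [Hbc _]].
      assert (Hc : le P c u) by (apply Hin; simpl; auto).
      assert (Hbu : lt b u) by (eapply lt_le_trans; eauto).
      eapply minimal_no_lt. apply Hall. exact Hbu. exact Hab.
Qed.

Lemma chain_sub (Q R : P -> Prop) s : (forall x, Q x -> R x) -> chain_in Q s -> chain_in R s.
Proof. intros H [H1 H2]; split; auto. Qed.

Lemma height2_iff (u : P) : dim_le (setT P) 2 ->
  (height u 2 <-> exists a b, lt a b /\ lt b u).
Proof.
  intro Hdim. split.
  - intros [[s [[Hi Hin] Hl]] _].
    destruct s as [|a [|b [|c [|d t]]]]; simpl in Hl; try discriminate.
    simpl in Hi. destruct Hi as [Hab [Hbc _]].
    assert (Hc : le P c u) by (apply Hin; simpl; auto).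
    exists a, b. split; auto. eapply lt_le_trans; eauto.
  - intros [a [b [Hab Hbu]]]. split.
    + exists [a; b; u]. split; [split|].
      * simpl. auto.
      * intros x Hx. simpl in Hx. unfold Lset.
        destruct Hx as [<-|[<-|[<-|[]]]].
        -- destruct (lt_trans' _ _ _ Hab Hbu); auto.
        -- apply Hbu.
        -- apply le_refl.
      * reflexivity.
    + intros s Hs. apply Hdim. eapply chain_sub; [|exact Hs]. intros; exact I.
Qed.

Lemma no4 (a b c d : P) : dim_le (setT P) 2 -> lt a b -> lt b c -> lt c d -> False.
Proof.
  intros Hd H1 H2 H3. assert (L := Hd [a;b;c;d]). simpl in L.
  assert (4 <= 3); [|lia]. apply L. split. simpl; auto. intros; exact I.
Qed.

Lemma pos_height_of (u : P) : dim_le (setT P) 2 -> ~ minimal u -> pos_height u.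
Proof.
  intros Hd Hnm.
  destruct (classic (exists a b, lt a b /\ lt b u)) as [Hc|Hc].
  - exists 2. split; [|lia]. apply height2_iff; auto.
  - exists 1. split; [|lia]. apply height1_iff. split; auto.
    intros v Hv. apply NNPP; intro Hn. apply not_minimal_ex in Hn.
    destruct Hn as [t Ht]. apply Hc. exists t, v; auto.
Qed.

Lemma exists_min_below (u : P) : dim_le (setT P) 2 -> exists w, minimal w /\ le P w u.
Proof.
  intro Hd.
  destruct (classic (minimal u)) as [H|H]. exists u; split; auto; apply le_refl.
  apply not_minimal_ex in H as [v Hv].
  destruct (classic (minimal v)) as [H|H]. exists v; split; auto; apply Hv.
  apply not_minimal_ex in H as [t Ht].
  destruct (classic (minimal t)) as [H|H].
  exists t; split; auto. destruct (lt_trans' _ _ _ Ht Hv); auto.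
  apply not_minimal_ex in H as [s Hs]. exfalso. eapply no4; eauto.
Qed.

End Gen.

Arguments h1 {P} u.

Lemma incr_map (P Q : Poset) (f : P -> Q) :
  (forall x y, lt x y -> lt (f x) (f y)) ->
  forall s, incr s -> incr (map f s).
Proof.
  intros Hf s. induction s as [|a s IH]; simpl; auto.
  destruct s as [|b s]; simpl; auto.
  intros [H1 H2]. split; auto. apply IH; auto.
Qed.

Lemma dim_pull (P Q : Poset) (f : P -> Q) n :
  (forall x y, lt x y -> lt (f x) (f y)) ->
  dim_le (setT Q) n -> dim_le (setT P) n.
Proof.
  intros Hf Hd s [Hi _]. rewrite <- (length_map f). apply Hd. split.
  apply incr_map; auto. intros; exact I.
Qed.

Lemma sig_eq {A : Type} {Pr : A -> Prop} (a b : {x : A | Pr x}) :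
  proj1_sig a = proj1_sig b -> a = b.
Proof.
  destruct a as [a Ha], b as [b Hb]; simpl; intros <-. f_equal. apply proof_irrelevance.
Qed.

Definition bij (A B : Type) : Prop :=
  exists f : A -> B, (forall a b, f a = f b -> a = b) /\ (forall y, exists a, f a = y).

Lemma bij_trans A B C : bij A B -> bij B C -> bij A C.
Proof.
  intros [f [fi fs]] [g [gi gs]]. exists (fun a => g (f a)). split.
  - intros a b H. apply fi, gi, H.
  - intros y. destruct (gs y) as [b <-]. destruct (fs b) as [a <-]. eauto.
Qed.

Lemma bij_sym A B : bij A B -> bij B A.
Proof.
  intros [f [fi fs]].
  exists (fun y => proj1_sig (constructive_indefinite_description _ (fs y))). split.
  - intros a b H.
    destruct (constructive_indefinite_description _ (fs a)) as [x Hx].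
    destruct (constructive_indefinite_description _ (fs b)) as [z Hz]. simpl in H.
    subst. reflexivity.
  - intros a. exists (f a).
    destruct (constructive_indefinite_description _ (fs (f a))) as [x Hx]. simpl. auto.
Qed.

Lemma bij_refl A : bij A A.
Proof. exists (fun x => x). split; eauto. Qed.

Lemma bij_inj A B (f : A -> B) : (forall a b, f a = f b -> a = b) ->
  bij A {y : B | exists a, f a = y}.
Proof.
  intro fi. exists (fun a => exist _ (f a) (ex_intro _ a eq_refl)). split.
  - intros a b H. apply fi. exact (f_equal (@proj1_sig _ _) H).
  - intros [y [a Ha]]. exists a. apply sig_eq. simpl. auto.
Qed.

Lemma bij_ext A (P Q : A -> Prop) : (forall x, P x <-> Q x) ->
  bij {x | P x} {x | Q x}.
Proof.
  intro H. exists (fun s => exist Q (proj1_sig s) (proj1 (H _) (proj2_sig s))). split.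
  - intros a b E. apply sig_eq. exact (f_equal (@proj1_sig _ _) E).
  - intros [y Hy]. exists (exist P y (proj2 (H _) Hy)). apply sig_eq. reflexivity.
Qed.

(* Schroeder-Bernstein *)
Section SB.
Variables (A B : Type) (f : A -> B) (g : B -> A).
Hypotheses (fi : forall a b, f a = f b -> a = b) (gi : forall a b, g a = g b -> a = b).

Definition CC (a : A) : Prop :=
  exists n a0, ~ (exists b, g b = a0) /\ Nat.iter n (fun x => g (f x)) a0 = a.

Lemma notCC_range a : ~ CC a -> exists b, g b = a.
Proof.
  intro H. apply NNPP; intro H'. apply H. exists 0, a. simpl. auto.
Qed.

Definition sbh (a : A) : B :=
  match excluded_middle_informative (CC a) with
  | left _ => f a
  | right nC => proj1_sig (constructive_indefinite_description _ (notCC_range a nC))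
  end.

Lemma sbh_bij : bij A B.
Proof.
  exists sbh. split.
  - intros a1 a2. unfold sbh.
    destruct (excluded_middle_informative (CC a1)) as [C1|N1];
    destruct (excluded_middle_informative (CC a2)) as [C2|N2].
    + apply fi.
    + destruct (constructive_indefinite_description _ (notCC_range a2 N2)) as [b Hb]; simpl.
      intro E. exfalso. apply N2. destruct C1 as [n [a0 [H1 H2]]].
      exists (S n), a0. split; auto. simpl. rewrite H2, E. auto.
    + destruct (constructive_indefinite_description _ (notCC_range a1 N1)) as [b Hb]; simpl.
      intro E. exfalso. apply N1. destruct C2 as [n [a0 [H1 H2]]].
      exists (S n), a0. split; auto. simpl. rewrite H2, <- E. auto.
    + destruct (constructive_indefinite_description _ (notCC_range a1 N1)) as [b Hb]; simpl.
      destruct (constructive_indefinite_description _ (notCC_range a2 N2)) as [c Hc]; simpl.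
      intro E. subst. auto.
  - intro b. destruct (classic (CC (g b))) as [C|N].
    + destruct C as [n [a0 [H1 H2]]]. destruct n as [|n].
      * simpl in H2. exfalso. apply H1. eauto.
      * simpl in H2. apply gi in H2.
        exists (Nat.iter n (fun x => g (f x)) a0). unfold sbh.
        destruct (excluded_middle_informative _) as [C'|N'].
        -- auto.
        -- exfalso. apply N'. exists n, a0. auto.
    + exists (g b). unfold sbh.
      destruct (excluded_middle_informative (CC (g b))) as [C'|N'].
      * contradiction.
      * destruct (constructive_indefinite_description _ (notCC_range (g b) N')) as [c Hc]. simpl.
        apply gi; auto.
Qed.
End SB.

Lemma SB A B (f : A -> B) (g : B -> A) :
  (forall a b, f a = f b -> a = b) -> (forall a b, g a = g b -> a = b) -> bij A B.
Proof. intros; eapply sbh_bij; eauto. Qed.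

Section LP.
Variables (P : Poset) (u0 : P).

Definition twoG (z : P) := exists a b, a <> b /\ minimal a /\ minimal b /\ le P a z /\ le P b z.
Definition inHG (z : P) := minimal z \/ (h1 z /\ twoG z).
Definition LamP (z : P) :=
  (h1 z /\ inHG z /\ z <> u0) \/
  (inHG z /\ z <> u0 /\ ~ exists w, le P z w /\ le P w u0 /\ h1 w /\ inHG w /\ w <> u0).



Definition liftL (v : P) (H : le P v u0) : Lposet u0 := exist (Lset u0) v H.

Lemma ltL (y z : Lposet u0) : lt y z <-> lt (proj1_sig y) (proj1_sig z).
Proof.
  split.
  - intros [H1 H2]. split; auto. intro E. apply H2. apply sig_eq. auto.
  - intros [H1 H2]. split; auto. intro E. apply H2. subst; auto.
Qed.

Lemma minL (y : Lposet u0) : minimal y <-> minimal (proj1_sig y).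
Proof.
  split.
  - intros H v Hv.
    assert (Hv0 : le P v u0) by (eapply le_trans; [exact Hv| apply (proj2_sig y)]).
    specialize (H (liftL v Hv0) Hv). rewrite <- H. reflexivity.
  - intros H v Hv. apply sig_eq. apply H. exact Hv.
Qed.

Lemma h1L (y : Lposet u0) : h1 y <-> h1 (proj1_sig y).
Proof.
  split.
  - intros [Hn Hall]. split.
    + intro H. apply Hn. apply minL. auto.
    + intros v Hv.
      assert (Hv0 : le P v u0) by (eapply le_trans; [apply Hv| apply (proj2_sig y)]).
      apply (minL (liftL v Hv0)). apply Hall. apply ltL. exact Hv.
  - intros [Hn Hall]. split.
    + intro H. apply Hn. apply minL. auto.
    + intros v Hv. apply minL. apply Hall. apply ltL. auto.
Qed.

Lemma heightL1 (y : Lposet u0) : height y 1 <-> h1 (proj1_sig y).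
Proof. rewrite height1_iff. apply h1L. Qed.

Lemma inHL (y : Lposet u0) : in_H y <-> inHG (proj1_sig y).
Proof.
  unfold in_H, inHG. rewrite minL, heightL1. split.
  - intros [H|[H1 [a [b [Hab [Ha [Hb [Hay Hby]]]]]]]]; [left; auto|right].
    split; auto. exists (proj1_sig a), (proj1_sig b).
    split. intro E. apply Hab, sig_eq, E.
    split. apply minL; auto. split. apply minL; auto. auto.
  - intros [H|[H1 [a [b [Hab [Ha [Hb [Hay Hby]]]]]]]]; [left; auto|right].
    split; auto.
    assert (Ha0 : le P a u0) by (eapply le_trans; [exact Hay| apply (proj2_sig y)]).
    assert (Hb0 : le P b u0) by (eapply le_trans; [exact Hby| apply (proj2_sig y)]).
    exists (liftL a Ha0), (liftL b Hb0).
    split. intro E. apply Hab. exact (f_equal (@proj1_sig _ _) E).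
    split. apply (minL (liftL a Ha0)); auto. split. apply (minL (liftL b Hb0)); auto. auto.
Qed.

Lemma neqTop (y : Lposet u0) : y <> Ltop u0 <-> proj1_sig y <> u0.
Proof.
  split.
  - intros H E. apply H. apply sig_eq. auto.
  - intros H E. apply H. subst. reflexivity.
Qed.

Lemma LambdaL_iff (y : Lposet u0) : Lambda (Ltop u0) y <-> LamP (proj1_sig y).
Proof.
  unfold Lambda, LamP, in_Hstar. rewrite heightL1, inHL, neqTop. split.
  - intros [H|[H1 H2]]; [left; tauto|right].
    split; [tauto|]. split; [tauto|]. intros [w [Hyw [Hw0 [Hw1 [Hw2 Hw3]]]]].
    apply H2. exists (liftL w Hw0). unfold Gset. simpl.
    rewrite heightL1, inHL, neqTop. simpl. auto.
  - intros [H|[H1 [H2 H3]]]; [left; tauto|right].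
    split; [tauto|]. intros [w [Hyw [Hw1 [Hw2 Hw3]]]].
    rewrite heightL1 in Hw1. rewrite inHL in Hw2. rewrite neqTop in Hw3.
    apply H3. exists (proj1_sig w). split; auto. split; auto. apply (proj2_sig w).
Qed.

Lemma dimL : dim_le (setT P) 2 -> dim_le (setT (Lposet u0)) 2.
Proof.
  apply (dim_pull (Lposet u0) P (fun y => proj1_sig y)). intros x y H. apply ltL. auto.
Qed.

End LP.

Lemma finite_sub (P : Poset) (A B : P -> Prop) :
  (forall x, A x -> B x) -> finite_set B -> finite_set A.
Proof. intros H [l Hl]. exists l. auto. Qed.

Lemma finite_union (P : Poset) (A B : P -> Prop) :
  finite_set A -> finite_set B -> finite_set (fun x => A x \/ B x).
Proof.
  intros [l1 H1] [l2 H2]. exists (l1 ++ l2). intros x [H|H]; apply in_or_app; auto.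
Qed.

Lemma finite_empty (P : Poset) (A : P -> Prop) : (forall x, ~ A x) -> finite_set A.
Proof. intros H. exists []. intros x Hx. exfalso; eapply H; eauto. Qed.

Lemma finite_bigunion (P : Poset) (I : Type) (ls : list I) (F : I -> P -> Prop) :
  (forall a, In a ls -> finite_set (F a)) ->
  finite_set (fun x => exists a, In a ls /\ F a x).
Proof.
  induction ls as [|a ls IH]; intros H.
  - apply finite_empty. intros x [a [[] _]].
  - eapply finite_sub; [|apply finite_union; [apply (H a); simpl; auto| apply IH; intros; apply H; simpl; auto]].
    intros x [b [[<-|Hb] Hx]]; [left; auto | right; eauto].
Qed.

Lemma finite_image (P Q : Poset) (A : P -> Prop) (B : Q -> Prop) (g : P -> Q) :
  (forall y, B y -> exists x, A x /\ g x = y) -> finite_set A -> finite_set B.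
Proof.
  intros H [l Hl]. exists (map g l). intros y Hy. destruct (H y Hy) as [x [Hx <-]].
  apply in_map. auto.
Qed.

Lemma finite_bij (P : Poset) (A : P -> Prop) (y0 : P) :
  finite_set A -> bij {x : P | A x} P -> finite_set (setT P).
Proof.
  intros [l Hl] [f [fi fs]].
  destruct (fs y0) as [s0 _].
  set (g := fun x => match excluded_middle_informative (A x) with
                     | left H => f (exist _ x H) | right _ => f s0 end).
  exists (map g l). intros y _. destruct (fs y) as [[x Hx] <-].
  replace (f (exist _ x Hx)) with (g x).
  - apply in_map. auto.
  - unfold g. destruct (excluded_middle_informative (A x)) as [H|H]; [|contradiction].
    f_equal. apply sig_eq. reflexivity.
Qed.

Section VS.
Variables (V : Poset) (m : V).
Hypotheses (HK : is_K V) (Hp : proper V) (Hm : maximal m)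
  (Hu : forall u : V, maximal u -> u = m) (Hch : has_chain (setT V) 1).

Lemma dimV : dim_le (setT V) 2.
Proof. apply HK. Qed.

Lemma all_le_m (x : V) : le V x m.
Proof.
  apply NNPP; intro H.
  assert (Hx : ~ maximal x) by (intro Hx; apply Hu in Hx; subst; apply H, le_refl).
  apply not_maximal_ex in Hx as [y Hy].
  assert (Hy' : ~ maximal y).
  { intro Hy'. apply Hu in Hy'. subst. apply H, Hy. }
  apply not_maximal_ex in Hy' as [z Hz].
  assert (Hz' : ~ maximal z).
  { intro Hz'. apply Hu in Hz'. subst. apply H. apply (lt_trans' _ _ _ _ Hy Hz). }
  apply not_maximal_ex in Hz' as [t Ht].
  eapply no4; [apply dimV|exact Hy|exact Hz|exact Ht].
Qed.

Lemma lt_m (x : V) : x <> m -> lt x m.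
Proof. intro H; split; auto. apply all_le_m. Qed.

Lemma m_not_min : ~ minimal m.
Proof.
  destruct Hch as [s [[Hi _] Hl]].
  destruct s as [|a [|b [|c t]]]; simpl in Hl; try discriminate.
  simpl in Hi. destruct Hi as [Hab _].
  intro Hmin. eapply minimal_no_lt; [exact Hmin|]. eapply lt_le_trans; eauto. apply all_le_m.
Qed.

Lemma classify (x : V) : x <> m -> minimal x \/ h1 x.
Proof.
  intro Hx. destruct (classic (minimal x)) as [H|H]; [left; auto|right].
  split; auto. intros v Hv. apply NNPP; intro Hn. apply not_minimal_ex in Hn as [t Ht].
  eapply no4; [apply dimV|exact Ht|exact Hv|apply lt_m; auto].
Qed.

Lemma below_lt_min (v x : V) : lt v x -> x <> m -> minimal v.
Proof.
  intros Hv Hx. apply NNPP; intro Hn. apply not_minimal_ex in Hn as [t Ht].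
  eapply no4; [apply dimV|exact Ht|exact Hv|apply lt_m; auto].
Qed.

Definition two (c : V) : Prop :=
  exists a b, a <> b /\ minimal a /\ minimal b /\ le V a c /\ le V b c.
Definition H1s (c : V) : Prop := c <> m /\ h1 c /\ two c.
Definition lone (w x : V) : Prop := between m w x.

Lemma lone_char (w x : V) :
  lone w x <-> (x <> m /\ lt w x /\ forall v, lt v x -> v = w).
Proof.
  split.
  - intros [HG HL]. assert (Hxm : x <> m).
    { intro E. destruct (proj2 (HG m) eq_refl) as [_ H]. auto. }
    split; auto. split.
    + destruct (proj2 (HL w) eq_refl) as [H1 H2]. split; auto.
    + intros v [H1 H2]. apply HL. auto.
  - intros [Hxm [Hw Hall]]. split.
    + intro v. split.
      * intros [H1 H2]. apply NNPP; intro Hv.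
        eapply no4; [apply dimV|exact Hw|split; [exact H1|auto]|apply lt_m; auto].
      * intros ->. split; [apply all_le_m|auto].
    + intro v. split.
      * intros [H1 H2]. apply Hall. split; auto.
      * intros ->. destruct Hw; split; auto.
Qed.

Lemma lone_min (w x : V) : lone w x -> minimal w.
Proof. intro H. apply lone_char in H as [Hx [Hw _]]. eapply below_lt_min; eauto. Qed.

Lemma lone_uniq (w w' x : V) : lone w x -> lone w' x -> w = w'.
Proof.
  intros H H'. apply lone_char in H as [_ [_ Ha]]. apply lone_char in H' as [_ [Hw' _]].
  symmetry; auto.
Qed.

Lemma lone_not_min (w x : V) : lone w x -> ~ minimal x.
Proof. intro H. apply lone_char in H as [_ [Hw _]]. intro Hm'. eapply minimal_no_lt; eauto. Qed.

Lemma lone_not_two (w x : V) : lone w x -> ~ two x.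
Proof.
  intros H [a [b [Hab [Ha [Hb [Hax Hbx]]]]]].
  apply lone_char in H as [Hxm [Hw Hall]].
  assert (Hnm : ~ minimal x) by (intro Hm'; eapply minimal_no_lt; eauto).
  assert (a <> x) by (intro; subst; auto).
  assert (b <> x) by (intro; subst; auto).
  apply Hab. rewrite (Hall a), (Hall b); auto; split; auto.
Qed.

Lemma nonlone (x : V) : x <> m -> h1 x -> ~ two x -> exists w, lone w x.
Proof.
  intros Hxm [Hnm Hall] Hnt.
  destruct (not_minimal_ex _ _ Hnm) as [w Hw].
  exists w. apply lone_char. split; auto. split; auto.
  intros v Hv. apply NNPP; intro Hvw. apply Hnt. exists v, w.
  split; auto. split; [apply Hall; auto|]. split; [apply Hall; auto|].
  split; [apply Hv|apply Hw].
Qed.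

Lemma Lambda_char (l : V) : Lambda m l -> l <> m /\ (minimal l \/ H1s l).
Proof.
  intros HL. assert (Hs : in_Hstar m l) by (destruct HL as [[_ H]|[H _]]; auto).
  destruct Hs as [HH Hlm]. split; auto.
  destruct HH as [H|[H1 [a [b [Hab [Ha [Hb [Hal Hbl]]]]]]]]; [left; auto|right].
  split; auto. split. apply height1_iff; auto. exists a, b; auto 6.
Qed.

Lemma H1s_in_Hstar (c : V) : H1s c -> height c 1 /\ in_Hstar m c.
Proof.
  intros [Hcm [Hh Ht]]. split. apply height1_iff; auto.
  split; auto. right. split. apply height1_iff; auto. exact Ht.
Qed.

Lemma Lambda_of_H1s (c : V) : H1s c -> Lambda m c.
Proof. intro H. left. apply H1s_in_Hstar; auto. Qed.

Lemma Hstar_h1_H1s (c : V) : height c 1 -> in_Hstar m c -> H1s c.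
Proof.
  intros Hh [HH Hcm]. apply height1_iff in Hh. split; auto. split; auto.
  destruct HH as [H|[_ H]]; auto. exfalso. apply Hh; auto.
Qed.

Lemma Lambda_above (w : V) : minimal w -> exists l, Lambda m l /\ le V w l.
Proof.
  intro Hw. destruct (classic (exists c, le V w c /\ H1s c)) as [[c [H1 H2]]|H].
  - exists c. split; auto. apply Lambda_of_H1s; auto.
  - exists w. split; [|apply le_refl]. right. split.
    + split. left; auto. intro E; subst. apply m_not_min; auto.
    + intros [c [Hc [Hh Hs]]]. apply H. exists c. split; auto. apply Hstar_h1_H1s; auto.
Qed.

Lemma lone_not_Lambda (w x : V) : lone w x -> ~ Lambda m x.
Proof.
  intros H HL. apply Lambda_char in HL as [_ [Hmin|[_ [_ Ht]]]].
  - eapply lone_not_min; eauto.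
  - eapply lone_not_two; eauto.
Qed.

Lemma lone_inf (w c : V) : lt w c -> lt c m -> ~ finite_set (lone w).
Proof. intros H1 H2. destruct HK as [_ [_ [_ [_ H]]]]. eapply H; eauto. Qed.

Lemma lone_inf' (w : V) : (exists x, lone w x) -> ~ finite_set (lone w).
Proof.
  intros [x Hx]. pose proof Hx as Hx'. apply lone_char in Hx as [Hxm [Hw _]].
  apply lone_inf with x; auto. apply lt_m; auto.
Qed.

Lemma lone_bij (w : V) : (exists x, lone w x) -> bij {x | lone w x} V.
Proof.
  intros [x Hx]. destruct (Hp m w Hm (lone_min _ _ Hx)) as [H|H].
  - exfalso; eapply H; eauto.
  - exact H.
Qed.

Lemma V_infinite (w : V) : (exists x, lone w x) -> ~ finite_set (setT V).
Proof.
  intros Hx Hf. apply (lone_inf' w Hx). eapply finite_sub; [|exact Hf]. intros; exact I.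
Qed.

Lemma H1s_mub (c a b : V) : H1s c -> a <> b -> minimal a -> minimal b ->
  le V a c -> le V b c -> mub (fun z => z = a \/ z = b) c.
Proof.
  intros [Hcm [Hh _]] Hab Ha Hb Hac Hbc. split.
  - intros z [->| ->]; auto.
  - intros y Hy Hyc. apply NNPP; intro Hne.
    assert (Hay : le V a y) by (apply Hy; auto).
    assert (Hby : le V b y) by (apply Hy; auto).
    assert (Hyn : a <> y).
    { intro E; subst y. apply Hab. symmetry. apply Ha; auto. }
    eapply no4; [apply dimV| split; [exact Hay|exact Hyn] | split; [exact Hyc|exact Hne] | apply lt_m; auto].
Qed.

Lemma Lambda_fin : finite_set (Lambda m).
Proof.
  destruct HK as [_ [[ml Hml] [_ [Hmub _]]]].
  set (F := fun (a b x : V) => minimal a /\ minimal b /\ a <> b /\ mub (fun z => z = a \/ z = b) x).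
  assert (HF : finite_set (fun x => minimal x \/ exists a, In a ml /\ (fun a x => exists b, In b ml /\ F a b x) a x)).
  { apply finite_union. exists ml; auto.
    apply finite_bigunion. intros a _. apply finite_bigunion. intros b _.
    destruct (classic (minimal a /\ minimal b /\ a <> b)) as [[H1 [H2 H3]]|H].
    - eapply finite_sub; [|apply (Hmub a b H1 H2 H3)]. intros x Hx; apply Hx.
    - apply finite_empty. intros x [H1 [H2 [H3 _]]]. auto. }
  eapply finite_sub; [|exact HF]. intros l Hl. apply Lambda_char in Hl as [_ [H|H]]; [left; auto|right].
  pose proof H as H'. destruct H as [_ [_ [a [b [Hab [Ha [Hb [Hal Hbl]]]]]]]].
  exists a. split; [apply Hml; auto|]. exists b. split; [apply Hml; auto|].
  unfold F. split; auto. split; auto. split; auto. apply H1s_mub; auto.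
Qed.

Definition Two : Prop :=
  exists X Y : V -> Prop, (forall x, X x -> Y x -> False) /\ bij {x | X x} V /\ bij {x | Y x} V.

Lemma Two_of_H1s (c : V) : H1s c -> Two.
Proof.
  intros Hc. pose proof Hc as [Hcm [[Hnm Hall] [a [b [Hab [Ha [Hb [Hac Hbc]]]]]]]].
  assert (Hac' : lt a c) by (split; auto; intro; subst; auto).
  assert (Hbc' : lt b c) by (split; auto; intro; subst; auto).
  assert (Ea : exists x, lone a x).
  { apply NNPP; intro N. apply (lone_inf a c Hac' (lt_m c Hcm)). apply finite_empty. eauto. }
  assert (Eb : exists x, lone b x).
  { apply NNPP; intro N. apply (lone_inf b c Hbc' (lt_m c Hcm)). apply finite_empty. eauto. }
  exists (lone a), (lone b). split; [|split; apply lone_bij; auto].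
  intros x H1 H2. apply Hab. eapply lone_uniq; eauto.
Qed.

Lemma split2 (S : V -> Prop) : Two -> bij {x | S x} V ->
  exists S1 : V -> Prop, (forall x, S1 x -> S x) /\ bij {x | S1 x} V /\
                         bij {x | S x /\ ~ S1 x} V.
Proof.
  intros [X [Y [Hd [HX HY]]]] HS.
  destruct (bij_sym _ _ HS) as [e [ei es]].
  set (S1 := fun x => exists y, X y /\ proj1_sig (e y) = x).
  assert (ei' : forall a b, proj1_sig (e a) = proj1_sig (e b) -> a = b).
  { intros a b H. apply ei, sig_eq, H. }
  exists S1. split; [|split].
  - intros x [y [_ <-]]. apply proj2_sig.
  - apply bij_sym. eapply bij_trans; [apply bij_sym, HX|].
    eapply bij_trans.
    + apply (bij_inj _ _ (fun s : {y | X y} => proj1_sig (e (proj1_sig s)))).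
      intros a b H. apply sig_eq, ei', H.
    + apply bij_ext. intros x. split.
      * intros [[y Hy] <-]. exists y; simpl; auto.
      * intros [y [Hy <-]]. exists (exist _ y Hy). reflexivity.
  - apply bij_sym.
    assert (HnX : bij {y | ~ X y} V).
    { destruct (bij_sym _ _ HY) as [eY [eYi _]].
      apply (SB _ _ (fun s => proj1_sig s)
               (fun v => exist (fun y => ~ X y) (proj1_sig (eY v))
                           (fun H => Hd _ H (proj2_sig (eY v))))).
      - intros a b H; apply sig_eq, H.
      - intros a b H. apply eYi, sig_eq. exact (f_equal (@proj1_sig _ _) H). }
    eapply bij_trans; [apply bij_sym, HnX|].
    eapply bij_trans.
    + apply (bij_inj _ _ (fun s : {y | ~ X y} => proj1_sig (e (proj1_sig s)))).
      intros a b H. apply sig_eq, ei', H.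
    + apply bij_ext. intros x. split.
      * intros [[y Hy] <-]. simpl. split. apply proj2_sig.
        intros [y' [Hy' E]]. apply ei' in E. subst. auto.
      * intros [Hx HnS]. destruct (es (exist _ x Hx)) as [y Hy].
        assert (~ X y).
        { intro HXy. apply HnS. exists y. split; auto. rewrite Hy. reflexivity. }
        exists (exist _ y H). simpl. rewrite Hy. reflexivity.
Qed.

Lemma splitk (ls : list V) : forall (Q S : V -> Prop),
  (forall q, Q q -> In q ls) -> (exists q, Q q) ->
  (forall a b, Q a -> Q b -> a <> b -> Two) ->
  bij {x | S x} V ->
  exists g : V -> V, (forall x, S x -> Q (g x)) /\
    (forall q, Q q -> bij {x | S x /\ g x = q} V).
Proof.
  induction ls as [|l ls IH]; intros Q S Hls Hne HT HS.
  - destruct Hne as [q Hq]. destruct (Hls q Hq).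
  - set (Q' := fun q => Q q /\ q <> l).
    assert (HQ' : forall q, Q' q -> In q ls).
    { intros q [Hq Hql]. destruct (Hls q Hq); auto. congruence. }
    destruct (classic (Q l)) as [Ql|nQl].
    + destruct (classic (exists q, Q' q)) as [[q' [Hq' Hq'l]]|N].
      * destruct (split2 S (HT _ _ Ql Hq' (not_eq_sym Hq'l)) HS) as [S1 [HS1 [B1 B2]]].
        destruct (IH Q' (fun x => S x /\ ~ S1 x) HQ' (ex_intro _ q' (conj Hq' Hq'l))
                    (fun a b Ha Hb => HT a b (proj1 Ha) (proj1 Hb)) B2) as [g [Hg1 Hg2]].
        exists (fun x => match excluded_middle_informative (S1 x) with
                         | left _ => l | right _ => g x end).
        split.
        -- intros x Hx. destruct (excluded_middle_informative (S1 x)); auto.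
           apply Hg1. auto.
        -- intros q Hq. destruct (classic (q = l)) as [->|Hql].
           ++ eapply bij_trans; [|exact B1]. apply bij_ext. intros x.
              destruct (excluded_middle_informative (S1 x)) as [H|H].
              ** split; [intros _; auto|intros HS1x; split; auto].  
              ** split; [|tauto]. intros [Hx E]. exfalso.
                 destruct (Hg1 x (conj Hx H)) as [_ Hne']. auto.
           ++ eapply bij_trans; [|apply (Hg2 q (conj Hq Hql))]. apply bij_ext. intros x.
              destruct (excluded_middle_informative (S1 x)) as [H|H].
              ** split; [intros [_ E]; congruence| intros [[_ H'] _]; contradiction].
              ** split; [intros [Hx E]; auto| intros [[Hx _] E]; auto].
      * exists (fun _ => l). split; auto.
        intros q Hq. assert (q = l).
        { apply NNPP; intro E. apply N. exists q. split; auto. }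
        subst q. eapply bij_trans; [|exact HS]. apply bij_ext. intros x. tauto.
    + destruct (IH Q' S HQ') as [g [Hg1 Hg2]]; auto.
      * destruct Hne as [q Hq]. exists q. split; auto. intro; subst; auto.
      * intros a b Ha Hb. apply HT; [apply Ha|apply Hb].
      * exists g. split.
        -- intros x Hx. apply Hg1; auto.
        -- intros q Hq. apply Hg2. split; auto. intro; subst; auto.
Qed.

Lemma asg_exists : exists asg : V -> V,
  (forall w x, lone w x -> Lambda m (asg x) /\ le V w (asg x)) /\
  (forall w l, Lambda m l -> le V w l -> (exists x, lone w x) ->
     bij {x | lone w x /\ asg x = l} V).
Proof.
  assert (G : forall w, exists g : V -> V,
    (forall x, lone w x -> Lambda m (g x) /\ le V w (g x)) /\
    (forall l, Lambda m l -> le V w l -> (exists x, lone w x) ->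
       bij {x | lone w x /\ g x = l} V)).
  { intro w. destruct (classic (exists x, lone w x)) as [Hex|N].
    - assert (Hw : minimal w) by (destruct Hex as [x Hx]; eapply lone_min; eauto).
      destruct Lambda_fin as [ll Hll].
      destruct (splitk ll (fun l => Lambda m l /\ le V w l) (lone w)) as [g [Hg1 Hg2]].
      + intros q [Hq _]; auto.
      + apply Lambda_above; auto.
      + intros a b [Ha Hwa] [Hb Hwb] Hab.
        apply Lambda_char in Ha as [_ [Ha|Ha]]; [|eapply Two_of_H1s; eauto].
        apply Lambda_char in Hb as [_ [Hb|Hb]]; [|eapply Two_of_H1s; eauto].
        exfalso. apply Hab. rewrite <- (Ha w Hwa). apply Hb; auto.
      + apply lone_bij; auto.
      + exists g. split; auto.
    - exists (fun x => x). split.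
      + intros x Hx; exfalso; eauto.
      + intros l _ _ Hx; contradiction. }
  set (Gf := fun w => proj1_sig (constructive_indefinite_description _ (G w))).
  assert (HG : forall w,
    (forall x, lone w x -> Lambda m (Gf w x) /\ le V w (Gf w x)) /\
    (forall l, Lambda m l -> le V w l -> (exists x, lone w x) ->
       bij {x | lone w x /\ Gf w x = l} V)).
  { intro w. unfold Gf. destruct (constructive_indefinite_description _ (G w)) as [g Hg]. exact Hg. }
  set (base := fun x => epsilon (inhabits m) (fun w => lone w x)).
  assert (Hbase : forall w x, lone w x -> base x = w).
  { intros w x Hx. unfold base. apply (lone_uniq _ _ x); [|auto].
    apply (epsilon_spec (inhabits m) (fun w => lone w x)). eauto. }
  exists (fun x => Gf (base x) x). split.
  - intros w x Hx. rewrite (Hbase w x Hx). apply HG; auto.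
  - intros w l Hl Hwl Hex. eapply bij_trans; [|apply (proj2 (HG w) l Hl Hwl Hex)].
    apply bij_ext. intros x. split; intros [H1 H2]; split; auto.
    + rewrite (Hbase w x H1) in H2; auto.
    + rewrite (Hbase w x H1); auto.
Qed.


Variable asg : V -> V.
Hypothesis Hasg1 : forall w x, lone w x -> Lambda m (asg x) /\ le V w (asg x).
Hypothesis Hasg2 : forall w l, Lambda m l -> le V w l -> (exists x, lone w x) ->
     bij {x | lone w x /\ asg x = l} V.

Definition Vm := {x : V | x <> m}.
Definition Lm := {l : V | Lambda m l}.

Variable l0 : Lm.

Definition DD (l c : V) : Prop := le V c l \/ ((exists w, lone w c) /\ asg c = l).

Definition leU (x y : Vm + Lm) : Prop :=
  match x, y with
  | inl a, inl b => le V (proj1_sig a) (proj1_sig b)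
  | inl a, inr l => DD (proj1_sig l) (proj1_sig a)
  | inr _, inl _ => False
  | inr l, inr l' => l = l'
  end.

Lemma leU_refl x : leU x x.
Proof. destruct x; simpl; auto. apply le_refl. Qed.

Lemma leU_antisym x y : leU x y -> leU y x -> x = y.
Proof.
  destruct x as [a|l], y as [b|l']; simpl; try tauto.
  intros H1 H2. f_equal. apply sig_eq. apply le_antisym; auto.
  intros ->; auto.
Qed.

Lemma lone_neq w x : lone w x -> x <> m.
Proof. intro H. apply lone_char in H. apply H. Qed.

Lemma DD_down (l a b : V) : le V a b -> DD l b -> DD l a.
Proof.
  intros Hab [H|[[w Hw] E]].
  - left. eapply le_trans; eauto.
  - destruct (classic (a = b)) as [->|Hne].
    + right. eauto.
    + left. pose proof Hw as Hw'. apply lone_char in Hw as [_ [_ Hall]].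
      rewrite (Hall a (conj Hab Hne)). rewrite <- E. apply (Hasg1 _ _ Hw').
Qed.

Lemma leU_trans x y z : leU x y -> leU y z -> leU x z.
Proof.
  destruct x as [a|l], y as [b|l'], z as [c|l'']; simpl; try tauto.
  - apply le_trans.
  - intros H1 H2. eapply DD_down; eauto.
  - intros H ->; auto.
  - intros -> ->; auto.
Qed.

Definition UP : Poset :=
  {| car := (Vm + Lm)%type; le := leU; le_refl := leU_refl;
     le_antisym := leU_antisym; le_trans := leU_trans |}.

Definition phi (x : UP) : V := match x with inl a => proj1_sig a | inr _ => m end.
Definition MU (x : UP) : Prop := match x with inl _ => False | inr _ => True end.

Lemma phi_mono (x y : UP) : le UP x y -> le V (phi x) (phi y).
Proof.
  destruct x as [a|l], y as [b|l']; simpl; try tauto.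
  - intros _. apply all_le_m.
  - intros _. apply le_refl.
Qed.

Lemma phi_strict (x y : UP) : lt x y -> lt (phi x) (phi y).
Proof.
  intros [H1 H2]. split. apply phi_mono; auto.
  destruct x as [a|l], y as [b|l']; simpl in *; try tauto.
  - intro E. apply H2. f_equal. apply sig_eq. auto.
  - apply (proj2_sig a).
  - subst. tauto.
Qed.

Lemma dimU : dim_le (setT UP) 2.
Proof. apply (dim_pull UP V phi). apply phi_strict. apply dimV. Qed.

Definition emb (v : V) : UP :=
  match excluded_middle_informative (v = m) with
  | left _ => inr l0
  | right H => inl (exist _ v H)
  end.

Lemma emb_eq (a : Vm) : emb (proj1_sig a) = inl a.
Proof.
  unfold emb. destruct (excluded_middle_informative (proj1_sig a = m)) as [E|N].
  - exfalso. apply (proj2_sig a). auto.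
  - f_equal. apply sig_eq. reflexivity.
Qed.

Definition lamb (v : V) : UP :=
  match excluded_middle_informative (Lambda m v) with
  | left H => inr (exist _ v H)
  | right _ => inr l0
  end.

Lemma lamb_eq (l : Lm) : lamb (proj1_sig l) = inr l.
Proof.
  unfold lamb. destruct (excluded_middle_informative (Lambda m (proj1_sig l))) as [E|N].
  - f_equal. apply sig_eq. reflexivity.
  - exfalso. apply N, (proj2_sig l).
Qed.

Lemma Lm_neq (l : Lm) : proj1_sig l <> m.
Proof. apply (Lambda_char _ (proj2_sig l)). Qed.

Definition lv (l : Lm) : Vm := exist _ (proj1_sig l) (Lm_neq l).

Lemma lv_le (l : Lm) : le UP (inl (lv l)) (inr l).
Proof. simpl. left. apply le_refl. Qed.

Lemma inr_not_min (l : Lm) : ~ minimal (inr l : UP).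
Proof. intro H. specialize (H _ (lv_le l)). discriminate. Qed.

Lemma minU (a : Vm) : minimal (inl a : UP) <-> minimal (proj1_sig a).
Proof.
  split.
  - intros H v Hv. assert (Hvm : v <> m).
    { intro E; subst. apply (proj2_sig a). apply Hm; auto. }
    specialize (H (inl (exist _ v Hvm)) Hv). injection H. intros <-. reflexivity.
  - intros H [b|l] Hv; simpl in Hv; [|tauto].
    f_equal. apply sig_eq. apply H; auto.
Qed.

Lemma ltU_inl (a b : Vm) : lt (inl a : UP) (inl b) <-> lt (proj1_sig a) (proj1_sig b).
Proof.
  split.
  - intro H. apply (phi_strict _ _ H).
  - intros [H1 H2]. split; [exact H1|]. intro E. apply H2. injection E. intros ->; auto.
Qed.

Lemma below_inl (y : UP) (a : Vm) : le UP y (inl a) -> exists b, y = inl b.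
Proof. destruct y as [b|l]; simpl; [eauto|tauto]. Qed.

Lemma h1U (a : Vm) : h1 (inl a : UP) <-> h1 (proj1_sig a).
Proof.
  split.
  - intros [Hn Hall]. split.
    + intro H. apply Hn. apply minU. auto.
    + intros v Hv. assert (Hvm : v <> m).
      { intro E; subst. apply (proj2_sig a). apply Hm; apply Hv. }
      apply (minU (exist _ v Hvm)). apply Hall. apply ltU_inl. exact Hv.
  - intros [Hn Hall]. split.
    + intro H. apply Hn. apply minU. auto.
    + intros y Hy. destruct (below_inl y a (proj1 Hy)) as [b ->].
      apply minU. apply Hall. apply ltU_inl. auto.
Qed.

Lemma twoU (a : Vm) : twoG UP (inl a) <-> two (proj1_sig a).
Proof.
  split.
  - intros [x [y [Hxy [Hx [Hy [Hxa Hya]]]]]].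
    destruct (below_inl x a Hxa) as [b ->]. destruct (below_inl y a Hya) as [c ->].
    exists (proj1_sig b), (proj1_sig c). split.
    + intro E. apply Hxy. f_equal. apply sig_eq. auto.
    + split. apply minU; auto. split. apply minU; auto. auto.
  - intros [x [y [Hxy [Hx [Hy [Hxa Hya]]]]]].
    assert (Hxm : x <> m) by (intro; subst; apply m_not_min; auto).
    assert (Hym : y <> m) by (intro; subst; apply m_not_min; auto).
    exists (inl (exist _ x Hxm)), (inl (exist _ y Hym)). split.
    + intro E. injection E. auto.
    + split. apply (minU (exist _ x Hxm)); auto. split. apply (minU (exist _ y Hym)); auto.
      simpl. auto.
Qed.

Lemma lift_inl (a : Vm) : exists l : Lm, DD (proj1_sig l) (proj1_sig a).
Proof.
  destruct (classify _ (proj2_sig a)) as [H|H].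
  - destruct (Lambda_above _ H) as [l [Hl Hal]]. exists (exist _ l Hl). left; auto.
  - destruct (classic (two (proj1_sig a))) as [Ht|Ht].
    + assert (HL : Lambda m (proj1_sig a)).
      { apply Lambda_of_H1s. split; [apply (proj2_sig a)|]. auto. }
      exists (exist _ _ HL). left. apply le_refl.
    + destruct (nonlone _ (proj2_sig a) H Ht) as [w Hw].
      exists (exist _ _ (proj1 (Hasg1 _ _ Hw))). right. simpl. eauto.
Qed.

Lemma inl_not_max (a : Vm) : ~ maximal (inl a : UP).
Proof.
  intro H. destruct (lift_inl a) as [l Hl]. specialize (H (inr l) Hl). discriminate.
Qed.

Lemma between_of_piece (l : Lm) (a : Vm) (x : V) (Hx : x <> m) :
  lone (proj1_sig a) x -> asg x = proj1_sig l ->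
  between (inr l : UP) (inl a) (inl (exist _ x Hx)).
Proof.
  intros Hlx Ha. pose proof Hlx as Hlx'. apply lone_char in Hlx' as [_ [Hax Hall]].
  split.
  - intros [b|l']; split.
    + intros [H1 H2]. exfalso. simpl in H1.
      assert (Hbx : proj1_sig b <> x).
      { intro E. apply H2. f_equal. apply sig_eq. auto. }
      apply (proj2_sig b).
      destruct Hlx as [HG _]. apply HG. split; auto.
    + discriminate.
    + intros [H1 H2]. simpl in H1. destruct H1 as [H1|[_ E]].
      * exfalso. destruct (classic (x = proj1_sig l')) as [E|N].
        -- apply (lone_not_Lambda _ _ Hlx). rewrite E. apply (proj2_sig l').
        -- apply (Lm_neq l'). destruct Hlx as [HG _]. apply HG. split; auto.
      * f_equal. apply sig_eq. congruence.
    + intros E. injection E. intros <-. split.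
      * simpl. right. eauto.
      * discriminate.
  - intros [b|l']; split.
    + intros [H1 H2]. simpl in H1.
      assert (Hbx : proj1_sig b <> x).
      { intro E. apply H2. f_equal. apply sig_eq. auto. }
      f_equal. apply sig_eq. apply Hall. split; auto.
    + intros E. injection E. intros <-. split.
      * simpl. apply Hax.
      * intro E'. injection E'. intro E''. apply (proj2 Hax). rewrite E''. reflexivity.
    + intros [H1 _]. simpl in H1. tauto.
    + discriminate.
Qed.

Lemma piece_of_between (l : Lm) (a : Vm) (y : UP) :
  between (inr l : UP) (inl a) y ->
  exists x (Hx : x <> m), y = inl (exist _ x Hx) /\ lone (proj1_sig a) x /\ asg x = proj1_sig l.
Proof.
  intros [HG HL].
  destruct y as [c|l'].
  2:{ exfalso. destruct (proj2 (HG (inr l)) eq_refl) as [H1 H2]. simpl in H1. subst. auto. }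
  exists (proj1_sig c), (proj2_sig c).
  assert (Ec : inl c = inl (exist _ (proj1_sig c) (proj2_sig c)) :> UP).
  { f_equal. apply sig_eq. reflexivity. }
  split; auto.
  assert (Hlone : lone (proj1_sig a) (proj1_sig c)).
  { apply lone_char. split; [apply (proj2_sig c)|]. split.
    - destruct (proj2 (HL (inl a)) eq_refl) as [H1 H2]. split; auto.
      intro E. apply H2. f_equal. apply sig_eq. auto.
    - intros v Hv. assert (Hvm : v <> m).
      { intro E. subst. apply (proj2_sig c). apply Hm. apply Hv. }
      assert (E : (inl (exist _ v Hvm) : UP) = inl a).
      { apply (proj1 (HL _)). split. apply Hv. intro E. injection E. intro E'. apply (proj2 Hv). rewrite <- E'. reflexivity. }
      injection E. intros <-. reflexivity. }
  split; auto.
  destruct (proj2 (HG (inr l)) eq_refl) as [H1 _]. simpl in H1.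
  destruct H1 as [H1|[_ E]]; auto. exfalso.
  destruct (classic (proj1_sig c = proj1_sig l)) as [E|N].
  - apply (lone_not_Lambda _ _ Hlone). rewrite E. apply (proj2_sig l).
  - apply (Lm_neq l). destruct Hlone as [HG' _]. apply HG'. split; auto.
Qed.

Definition piece (l : Lm) (a : Vm) (x : V) : Prop := lone (proj1_sig a) x /\ asg x = proj1_sig l.

Lemma bij_between_piece (l : Lm) (a : Vm) :
  bij {y : UP | between (inr l : UP) (inl a) y} {x | piece l a x}.
Proof.
  eapply bij_trans.
  - apply (bij_inj _ _ (fun s : {y : UP | between (inr l : UP) (inl a) y} => phi (proj1_sig s))).
    intros [y1 H1] [y2 H2]. simpl. intro E. apply sig_eq. simpl.
    destruct (piece_of_between _ _ _ H1) as [x1 [Hx1 [-> _]]].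
    destruct (piece_of_between _ _ _ H2) as [x2 [Hx2 [-> _]]].
    simpl in E. subst. f_equal. apply sig_eq. reflexivity.
  - apply bij_ext. intros x. split.
    + intros [[y Hy] <-]. simpl. destruct (piece_of_between _ _ _ Hy) as [x1 [Hx1 [-> [H1 H2]]]].
      split; auto.
    + intros [H1 H2]. exists (exist _ _ (between_of_piece l a x (lone_neq _ _ H1) H1 H2)).
      reflexivity.
Qed.

Lemma bij_VU : (exists w x, lone w x) -> bij V UP.
Proof.
  intros [w [x Hx]]. destruct (bij_sym _ _ (lone_bij w (ex_intro _ x Hx))) as [e [ei _]].
  apply (SB _ _ (fun v => inl (exist _ (proj1_sig (e v)) (lone_neq _ _ (proj2_sig (e v)))) : UP)
           (fun u : UP => match u with inl a => proj1_sig (e (proj1_sig a)) | inr l => proj1_sig l end)).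
  - intros a b E. injection E. intro E'. apply ei, sig_eq, E'.
  - intros [a|l] [b|l'] E.
    + f_equal. apply sig_eq. apply ei, sig_eq, E.
    + exfalso. apply (lone_not_Lambda _ _ (proj2_sig (e (proj1_sig a)))). rewrite E. apply (proj2_sig l').
    + exfalso. apply (lone_not_Lambda _ _ (proj2_sig (e (proj1_sig b)))). rewrite <- E. apply (proj2_sig l).
    + f_equal. apply sig_eq. auto.
Qed.

Lemma maxU (u : UP) : maximal u -> exists l, u = inr l.
Proof. destruct u as [a|l]; intro H; [exfalso; eapply inl_not_max; eauto| eauto]. Qed.

Lemma minU' (u : UP) : minimal u -> exists a : Vm, u = inl a /\ minimal (proj1_sig a).
Proof.
  destruct u as [a|l]; intro H; [|exfalso; eapply inr_not_min; eauto].
  exists a. split; auto. apply minU; auto.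
Qed.

Lemma properU : proper UP.
Proof.
  intros u w Hu' Hw. destruct (maxU u Hu') as [l ->]. destruct (minU' w Hw) as [a [-> Ha]].
  destruct (classic (exists x, piece l a x)) as [[x [H1 H2]]|N].
  - right. eapply bij_trans; [apply bij_between_piece|].
    eapply bij_trans; [|apply bij_VU; eauto].
    apply Hasg2; eauto. apply (proj2_sig l). rewrite <- H2. apply (Hasg1 _ _ H1).
  - left. intros y Hy. apply N. destruct (piece_of_between _ _ _ Hy) as [x [_ [_ H]]]. eauto.
Qed.

Lemma mub_fin_U (u v : UP) : minimal u -> minimal v -> u <> v ->
  finite_set (mub (fun z => z = u \/ z = v)).
Proof.
  intros Hu' Hv' Huv.
  destruct (minU' u Hu') as [a [-> Ha]]. destruct (minU' v Hv') as [b [-> Hb]].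
  assert (Hab : proj1_sig a <> proj1_sig b).
  { intro E. apply Huv. f_equal. apply sig_eq. auto. }
  destruct HK as [_ [_ [_ [Hmub _]]]].
  set (MV := mub (fun z => z = proj1_sig a \/ z = proj1_sig b)).
  eapply finite_sub with
    (B := fun z => (exists x, MV x /\ emb x = z) \/ (exists x, Lambda m x /\ lamb x = z)).
  - intros [c|l] [Hub Hmin].
    + left. exists (proj1_sig c). split; [|apply emb_eq]. split.
      * intros z [->| ->].
        -- exact (Hub (inl a) (or_introl eq_refl)).
        -- exact (Hub (inl b) (or_intror eq_refl)).
      * intros y Hy Hyc. assert (Hym : y <> m).
        { intro E. subst. apply (proj2_sig c). apply Hm. auto. }
        assert (E : (inl (exist _ y Hym) : UP) = inl c).
        { apply Hmin; [|exact Hyc]. intros z [->| ->]; simpl; apply Hy; auto. }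
        injection E. intros <-. reflexivity.
    + right. exists (proj1_sig l). split; [apply (proj2_sig l)|apply lamb_eq].
  - apply finite_union.
    + apply (finite_image V UP MV _ emb). auto. apply Hmub; auto.
    + apply (finite_image V UP (Lambda m) _ lamb). auto. apply Lambda_fin.
Qed.

Lemma Kcond_U (u v w : UP) : lt v u -> lt w v -> ~ finite_set (between u w).
Proof.
  intros Hvu Hwv.
  destruct u as [c|l].
  { exfalso. apply (no4 V (phi w) (phi v) (proj1_sig c) m dimV).
    apply phi_strict; auto. apply (phi_strict _ _ Hvu). apply lt_m, (proj2_sig c). }
  destruct v as [c|l'].
  2:{ exfalso. destruct Hvu as [H1 H2]. simpl in H1. subst. auto. }
  destruct w as [a|l'].
  2:{ exfalso. destruct Hwv as [H1 _]. simpl in H1. auto. }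
  assert (Hac : lt (proj1_sig a) (proj1_sig c)) by (apply ltU_inl; auto).
  destruct Hvu as [Hcl _]. simpl in Hcl.
  assert (Hinfo : (exists x, lone (proj1_sig a) x) /\ le V (proj1_sig a) (proj1_sig l)).
  { destruct Hcl as [Hcl|[[w' Hw'] E]].
    - destruct (classic (proj1_sig c = proj1_sig l)) as [E|N].
      + split.
        * apply NNPP. intro N. apply (lone_inf (proj1_sig a) (proj1_sig l)).
          -- rewrite <- E; auto.
          -- apply lt_m, Lm_neq.
          -- apply finite_empty. eauto.
        * rewrite <- E. apply Hac.
      + exfalso. apply (no4 V (proj1_sig a) (proj1_sig c) (proj1_sig l) m dimV); auto.
        split; auto. apply lt_m, Lm_neq.
    - pose proof Hw' as Hw''. apply lone_char in Hw'' as [_ [_ Hall]].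
      rewrite <- (Hall _ Hac) in Hw'. split; eauto.
      rewrite <- E. apply (Hasg1 _ _ Hw'). }
  destruct Hinfo as [Hne Hal].
  intro Hfin.
  assert (Hpf : finite_set (piece l a)).
  { apply (finite_image UP V (between (inr l : UP) (inl a)) (piece l a) phi); auto.
    intros x [H1 H2]. exists (inl (exist _ x (lone_neq _ _ H1))). split; auto.
    apply between_of_piece; auto. }
  apply (V_infinite _ Hne). apply (finite_bij V (piece l a) m Hpf).
  apply Hasg2; auto. apply (proj2_sig l).
Qed.

Lemma isK_U : is_K UP.
Proof.
  split; [apply dimU|]. split; [|split; [|split]].
  - apply (finite_image V UP minimal minimal emb).
    + intros y Hy. destruct (minU' y Hy) as [a [-> Ha]]. exists (proj1_sig a). split; auto. apply emb_eq.
    + apply HK.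
  - apply (finite_image V UP (Lambda m) (fun u => height u 2) lamb).
    + intros y Hy. apply (height2_iff UP y dimU) in Hy as [p [q [Hpq Hqy]]].
      destruct y as [a|l].
      * exfalso. apply (no4 V (phi p) (phi q) (proj1_sig a) m dimV).
        apply phi_strict; auto. apply (phi_strict _ _ Hqy). apply lt_m, (proj2_sig a).
      * exists (proj1_sig l). split; [apply (proj2_sig l)|apply lamb_eq].
    + apply Lambda_fin.
  - apply mub_fin_U.
  - apply Kcond_U.
Qed.

Lemma splitting_U : is_splitting V m UP MU phi.
Proof.
  split; [auto|]. split; [apply pos_height_of; [apply dimV|apply m_not_min]|].
  split; [|split; [|split; [|split; [|split; [|split; [|split]]]]]].
  - apply (finite_image V UP (Lambda m) MU lamb).
    + intros [a|l] H; simpl in H; [tauto|]. exists (proj1_sig l). split; [apply (proj2_sig l)|apply lamb_eq].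
    + apply Lambda_fin.
  - exists (inr l0). exact I.
  - intros [a|l] H; simpl in H; [tauto|]. split.
    + intros [b|l'] H'; simpl in H'; [tauto|]. subst; auto.
    + apply pos_height_of. apply dimU. apply inr_not_min.
  - apply phi_mono.
  - intros y. destruct (classic (y = m)) as [->|N].
    + exists (inr l0). reflexivity.
    + exists (inl (exist _ y N)). reflexivity.
  - intros [a|l]; simpl; split; try tauto. intro E. apply (proj2_sig a). auto.
  - intros v Hv. exists (inl (exist _ v Hv)). intros [b|l]; simpl; split.
    + intro E. f_equal. apply sig_eq. exact E.
    + intro E. injection E. intro E'. rewrite E'. reflexivity.
    + intro E. congruence.
    + discriminate.
  - intros x' y Hle. destruct (classic (y = m)) as [->|N].
    + destruct x' as [a|l].
      * destruct (lift_inl a) as [l Hl]. exists (inr l). split; auto.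
      * exists (inr l). split; [apply le_refl|reflexivity].
    + destruct x' as [a|l].
      * exists (inl (exist _ y N)). split; auto.
      * exfalso. apply N. apply (Hm y). exact Hle.
Qed.

Lemma d1_U (l : Lm) : d_eq1 (Ltop (inr l : UP)).
Proof.
  exists (liftL UP (inr l) (inl (lv l)) (lv_le l)).
  intro y. rewrite LambdaL_iff.
  assert (Key : LamP UP (inr l) (proj1_sig y) <-> proj1_sig y = inl (lv l)).
  { destruct y as [z Hz]. simpl. unfold Lset in Hz.
    assert (HLc := Lambda_char _ (proj2_sig l)).
    split.
    - destruct z as [c|l'].
      2:{ intros [[_ [_ N]]|[_ [N _]]]; exfalso; apply N; simpl in Hz; subst; auto. }
      simpl in Hz.
      assert (Fromtwo : two (proj1_sig c) -> inl c = inl (lv l) :> UP).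
      { intros Ht. destruct Hz as [Hz|[[w Hw] _]]; [|exfalso; eapply lone_not_two; eauto].
        destruct (classic (proj1_sig c = proj1_sig l)) as [E|N].
        - f_equal. apply sig_eq. auto.
        - exfalso. destruct Ht as [p [q [Hpq [Hp' [Hq' [Hpc Hqc]]]]]].
          assert (Hpc' : lt p (proj1_sig c) \/ lt q (proj1_sig c)).
          { destruct (classic (p = proj1_sig c)) as [E1|N1]; [|left; split; auto].
            right. split; auto. intro E2. apply Hpq. congruence. }
          destruct Hpc' as [Hx|Hx];
          (apply (no4 V _ (proj1_sig c) (proj1_sig l) m dimV Hx); [split; auto|apply lt_m, Lm_neq]). }
      intros [[Hh [Hin _]]|[Hin [_ Hno]]].
      + apply Fromtwo. destruct Hin as [Hmin|[_ Ht]]; [exfalso; apply Hh; auto|].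
        apply twoU; auto.
      + destruct Hin as [Hmin|[_ Ht]]; [|apply Fromtwo, twoU; auto].
        apply minU in Hmin.
        destruct Hz as [Hz|[[w Hw] _]]; [|exfalso; eapply lone_not_min; eauto].
        destruct (classic (proj1_sig c = proj1_sig l)) as [E|N].
        * f_equal. apply sig_eq. auto.
        * exfalso. destruct HLc as [_ [Hlmin|Hls]].
          -- apply N. apply Hlmin; auto.
          -- apply Hno. exists (inl (lv l)). split; [simpl; auto|]. split; [apply lv_le|].
             split; [apply h1U; apply Hls|]. split; [|discriminate].
             right. split; [apply h1U; apply Hls|]. apply twoU. apply Hls.
    - intros ->. destruct HLc as [_ [Hlmin|Hls]].
      + right. split; [left; apply minU; auto|]. split; [discriminate|].
        intros [w [Hlw [Hwl [Hh [Hin Hne]]]]].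
        destruct w as [c|l'].
        2:{ simpl in Hwl. subst. auto. }
        apply h1U in Hh.
        destruct Hin as [Hmin|[_ Ht]]; [apply minU in Hmin; apply Hh; auto|].
        apply twoU in Ht. simpl in Hwl, Hlw.
        destruct Hwl as [Hcl|[[w Hw] _]]; [|eapply lone_not_two; eauto].
        assert (E : proj1_sig c = proj1_sig l) by (apply le_antisym; auto).
        destruct Ht as [p [q [Hpq [Hp' [Hq' [Hpc Hqc]]]]]].
        apply Hpq. rewrite E in Hpc, Hqc.
        rewrite (Hlmin p Hpc), (Hlmin q Hqc). reflexivity.
      + left. split; [apply h1U; apply Hls|]. split; [|discriminate].
        right. split; [apply h1U; apply Hls|]. apply twoU; apply Hls. }
  rewrite Key. split.
  - intro E. apply sig_eq. exact E.
  - intros ->. reflexivity.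
Qed.

Lemma U_works : exists (U : Poset) (M : U -> Prop) (phi : U -> V),
    is_K U /\ proper U /\ is_splitting V m U M phi /\
    (forall mi : U, M mi -> d_eq1 (Ltop mi)).
Proof.
  exists UP, MU, phi. split; [apply isK_U|]. split; [apply properU|].
  split; [apply splitting_U|]. intros [a|l] H; simpl in H; [tauto|]. apply d1_U.
Qed.
End VS.

Theorem theorem4p8 (V : Poset) (m : V) :
  is_K V -> proper V ->
  maximal m -> (forall u : V, maximal u -> u = m) ->
  has_chain (setT V) 1 ->
  d_gt1 m ->
  exists (U : Poset) (M : U -> Prop) (phi : U -> V),
    is_K U /\ proper U /\ is_splitting V m U M phi /\
    (forall mi : U, M mi -> d_eq1 (Ltop mi)).
Proof.
  intros HK Hp Hm Hu Hch [x [_ [_ [Hx _]]]].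
  destruct (asg_exists V m HK Hp Hm Hu Hch) as [asg [H1 H2]].
  exact (U_works V m HK Hp Hm Hu Hch asg H1 H2 (exist _ x Hx)).
Qed.
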